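(* Let $c_1$ be a real constant and $f$ a smooth function of $\theta$ on an interval satisfying $$\sin\theta\Big[\big(3f'+c_1\big)f''-2ff'\Big]+\cos\theta\Big[ff''+4(f')^2+2c_1f'\Big]=0$$ (primes denote $d/d\theta$). In polar coordinates $x=r\cos\theta$, $y=r\sin\theta$ ($r>0$, $\theta$ in that interval), let $V=f'(\theta)/r^2$. Then $$J=p_\theta^2\Big(\cos\theta\,p_r-\sin\theta\,\frac{p_\theta}{r}\Big)+\Big[(2f'+c_1)\cos\theta-f\sin\theta\Big]p_r-\Big[(3f'+c_1)\sin\theta+f\cos\theta\Big]\frac{p_\theta}{r}$$ is a first integral of $\ddot x=-V_{,x}$, $\ddot y=-V_{,y}$, where $p_r=\dot r$ and $p_\theta=r^2\dot\theta$.
   Context: A first integral is a function of $(t,x,y,\dot x,\dot y)$ whose total time derivative vanishes along every solution of the given equations of motion. *)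

(* Defs.v *)
From Stdlib Require Import Reals.
From Coquelicot Require Import Coquelicot.
Open Scope R_scope.

Definition in_open (a b : Rbar) (s : R) : Prop := Rbar_lt a s /\ Rbar_lt s b.

Definition smooth_on (a b : Rbar) (f : R -> R) : Prop :=
  forall (n : nat) (s : R), in_open a b s -> ex_derive (Derive_n f n) s.

Definition Vpol (f : R -> R) (r th : R) : R := Derive f th / r ^ 2.

(* Cartesian gradient of V at the point x = r cos th, y = r sin th, via the
   polar chain rule: d/dx = cos th d/dr - (sin th / r) d/dth,
                     d/dy = sin th d/dr + (cos th / r) d/dth. *)
Definition Vx (f : R -> R) (r th : R) : R :=
  cos th * Derive (fun s => Vpol f s th) r - sin th / r * Derive (fun s => Vpol f r s) th.
Definition Vy (f : R -> R) (r th : R) : R :=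
  sin th * Derive (fun s => Vpol f s th) r + cos th / r * Derive (fun s => Vpol f r s) th.

Definition Jval (f : R -> R) (c1 r th pr pth : R) : R :=
  pth ^ 2 * (cos th * pr - sin th * pth / r)
  + ((2 * Derive f th + c1) * cos th - f th * sin th) * pr
  - ((3 * Derive f th + c1) * sin th + f th * cos th) * pth / r.

Definition f_ode (f : R -> R) (c1 th : R) : Prop :=
  let f1 := Derive f th in
  let f2 := Derive_n f 2 th in
  sin th * ((3 * f1 + c1) * f2 - 2 * f th * f1)
  + cos th * (f th * f2 + 4 * f1 ^ 2 + 2 * c1 * f1) = 0.

(* Main.v *)
Require Import Defs.
From Stdlib Require Import Reals Lra.
From Coquelicot Require Import Coquelicot.
Open Scope R_scope.

Lemma in_open_open (a b : Rbar) : open (in_open a b).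
Proof. unfold in_open. apply open_and; [apply open_Rbar_gt | apply open_Rbar_lt]. Qed.

Lemma in_open_loc (a b : Rbar) t : in_open a b t -> locally t (in_open a b).
Proof. intros H. exact (in_open_open a b t H). Qed.

Lemma asin_deriv0 : is_derive asin 0 1.
Proof.
  apply is_derive_Reals.
  assert (H : -1 < 0 < 1) by lra.
  apply derive_pt_eq_1 with (pr := derivable_pt_asin 0 H).
  rewrite derive_pt_asin. rewrite Rsqr_0, Rminus_0_r, sqrt_1. field.
Qed.

Lemma r_deriv (x y r th : R -> R) (I : R -> Prop) (HI : open I)
  (Hr : forall t, I t -> 0 < r t)
  (Hx : forall t, I t -> x t = r t * cos (th t))
  (Hy : forall t, I t -> y t = r t * sin (th t))
  (Hdx : forall t, I t -> ex_derive x t)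
  (Hdy : forall t, I t -> ex_derive y t) :
  forall s, I s -> is_derive r s (Derive x s * cos (th s) + Derive y s * sin (th s)).
Proof.
  intros s Hs.
  apply is_derive_ext_loc with (f := fun u => sqrt (x u ^ 2 + y u ^ 2)).
  - apply filter_imp with (2 := HI s Hs). intros u Hu.
    rewrite Hx, Hy by exact Hu.
    replace ((r u * cos (th u)) ^ 2 + (r u * sin (th u)) ^ 2) with (r u ^ 2).
    + apply sqrt_pow2. specialize (Hr u Hu). lra.
    + pose proof (sin2_cos2 (th u)). unfold Rsqr in H. nra.
  - assert (D : is_derive (fun u => x u ^ 2 + y u ^ 2) s
                 (2 * x s * Derive x s + 2 * y s * Derive y s)).
    { auto_derive. 
      - split; [apply Hdx | split; [apply Hdy|]]; auto.
      - change (Derive (fun x0 => x x0) s) with (Derive x s); change (Derive (fun x0 => y x0) s) with (Derive y s). ring. }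
    pose proof (is_derive_sqrt _ _ _ D) as E.
    assert (Hq : x s ^ 2 + y s ^ 2 = r s ^ 2).
    { rewrite Hx, Hy by exact Hs. pose proof (sin2_cos2 (th s)). unfold Rsqr in H. nra. }
    assert (Hrs := Hr s Hs).
    cbv beta in E. rewrite Hq in E. rewrite sqrt_pow2 in E by lra.
    specialize (E ltac:(nra)).
    replace (Derive x s * cos (th s) + Derive y s * sin (th s)) with
      ((2 * x s * Derive x s + 2 * y s * Derive y s) / (2 * r s)).
    + exact E.
    + rewrite Hx, Hy by exact Hs. field. lra.
Qed.

Lemma th_deriv (x y r th : R -> R) (I : R -> Prop) (HI : open I)
  (Hr : forall t, I t -> 0 < r t)
  (Hthc : forall t, I t -> continuous th t)
  (Hx : forall t, I t -> x t = r t * cos (th t))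
  (Hy : forall t, I t -> y t = r t * sin (th t))
  (Hdx : forall t, I t -> ex_derive x t)
  (Hdy : forall t, I t -> ex_derive y t) :
  forall s, I s -> is_derive th s ((Derive y s * cos (th s) - Derive x s * sin (th s)) / r s).
Proof.
  intros s Hs.
  pose proof (r_deriv x y r th I HI Hr Hx Hy Hdx Hdy) as Dr.
  set (a := th s).
  set (g := fun u => (y u * cos a - x u * sin a) / r u).
  assert (Hrs := Hr s Hs).
  assert (Hg0 : g s = 0).
  { unfold g, a. rewrite Hx, Hy by exact Hs. field. lra. }
  assert (Dg : is_derive g s ((Derive y s * cos a - Derive x s * sin a) / r s)).
  { unfold g. auto_derive.
    - assert (ex_derive r s) by (eexists; apply Dr; auto).
      assert (ex_derive x s) by auto. assert (ex_derive y s) by auto.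
      assert (r s <> 0) by lra.
      repeat split; assumption.
    - change (Derive (fun x0 => x x0) s) with (Derive x s).
      change (Derive (fun x0 => y x0) s) with (Derive y s).
      change (Derive (fun x0 => r x0) s) with (Derive r s).
      rewrite (is_derive_unique _ _ _ (Dr s Hs)).
      unfold a. rewrite Hx, Hy by exact Hs. field. lra. }
  assert (Da : is_derive asin (g s) 1) by (rewrite Hg0; exact asin_deriv0).
  pose proof (is_derive_comp asin g s _ _ Da Dg) as Dc.
  pose proof (is_derive_plus (fun _ => a) _ s _ _ (is_derive_const a s) Dc) as Dp.
  apply is_derive_ext_loc with (f := fun u => plus a (asin (g u))).
  - assert (Hb : locally s (fun u => ball a (mkposreal (PI/2) PI2_RGT_0) (th u))).
    { exact (proj1 (filterlim_locally th a) (Hthc s Hs) _). }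
    apply filter_imp with (2 := filter_and _ _ (HI s Hs) Hb).
    intros u [Iu Bu].
    change (Rabs (th u - a) < PI/2) in Bu.
    apply Rabs_def2 in Bu.
    assert (E : g u = sin (th u - a)).
    { unfold g. rewrite Hx, Hy by exact Iu. rewrite sin_minus. field. apply Rgt_not_eq, Hr, Iu. }
    rewrite E, asin_sin by lra. change (a + (th u - a) = th u). ring.
  - replace ((Derive y s * cos a - Derive x s * sin a) / r s) with
      (plus zero (scal ((Derive y s * cos a - Derive x s * sin a) / r s) 1)).
    + exact Dp.
    + change (0 + (Derive y s * cos a - Derive x s * sin a) / r s * 1 = (Derive y s * cos a - Derive x s * sin a) / r s). ring.
Qed.

Ltac etafix := repeat match goal with
  | |- context [Derive (fun u => ?h u) ?p] => change (Derive (fun u => h u) p) with (Derive h p)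
  end.

Lemma dVr (f : R -> R) (R0 T : R) : R0 <> 0 ->
  Derive (fun s => Vpol f s T) R0 = -2 * Derive f T / R0 ^ 3.
Proof.
  intros H. apply is_derive_unique. unfold Vpol. auto_derive.
  - rewrite Rmult_1_r. now apply Rmult_integral_contrapositive_currified.
  - field. exact H.
Qed.

Lemma dVth (f : R -> R) (R0 T : R) : ex_derive (Derive f) T ->
  Derive (fun s => Vpol f R0 s) T = Derive_n f 2 T / R0 ^ 2.
Proof.
  intros H. unfold Vpol.
  unfold Rdiv. rewrite (Derive_scal_l (Derive f)). reflexivity.
Qed.

Theorem mainTheorem14
  (c1 : R) (a b : Rbar) (f : R -> R)
  (Hsmooth : smooth_on a b f)
  (Hode : forall th, in_open a b th -> f_ode f c1 th)
  (t0 t1 : Rbar) (x y r th : R -> R)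
  (Hr : forall t, in_open t0 t1 t -> 0 < r t)
  (Hth : forall t, in_open t0 t1 t -> in_open a b (th t))
  (Hthc : forall t, in_open t0 t1 t -> continuous th t)
  (Hx : forall t, in_open t0 t1 t -> x t = r t * cos (th t))
  (Hy : forall t, in_open t0 t1 t -> y t = r t * sin (th t))
  (Hdx : forall t, in_open t0 t1 t -> ex_derive x t /\ ex_derive (Derive x) t)
  (Hdy : forall t, in_open t0 t1 t -> ex_derive y t /\ ex_derive (Derive y) t)
  (Hmx : forall t, in_open t0 t1 t -> Derive_n x 2 t = - Vx f (r t) (th t))
  (Hmy : forall t, in_open t0 t1 t -> Derive_n y 2 t = - Vy f (r t) (th t)) :
  forall t, in_open t0 t1 t ->
    is_derive
      (fun s => Jval f c1 (r s) (th s) (Derive r s) (r s ^ 2 * Derive th s)) t 0.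
Proof.
  intros t Ht.
  set (I := in_open t0 t1).
  assert (HI : open I) by apply in_open_open.
  assert (Hdx1 : forall s, I s -> ex_derive x s) by (intros; apply Hdx; auto).
  assert (Hdy1 : forall s, I s -> ex_derive y s) by (intros; apply Hdy; auto).
  pose proof (r_deriv x y r th I HI Hr Hx Hy Hdx1 Hdy1) as Dr.
  pose proof (th_deriv x y r th I HI Hr Hthc Hx Hy Hdx1 Hdy1) as Dth.
  set (Pf := fun s => Derive x s * cos (th s) + Derive y s * sin (th s)).
  set (Qf := fun s => r s * (Derive y s * cos (th s) - Derive x s * sin (th s))).
  set (R0 := r t). set (T := th t).
  set (X1 := Derive x t). set (Y1 := Derive y t).
  set (F0 := f T). set (F1 := Derive f T). set (F2 := Derive_n f 2 T).
  assert (HR0 : 0 < R0) by (apply Hr; auto).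
  assert (HT : in_open a b T) by (apply Hth; auto).
  assert (Ef1 : ex_derive f T).
  { exact (Hsmooth 0%nat T HT). }
  assert (Ef2 : ex_derive (Derive f) T).
  { exact (Hsmooth 1%nat T HT). }
  assert (Erth : Derive r t = Pf t) by (apply is_derive_unique, Dr; auto).
  assert (Eth : Derive th t = (Y1 * cos T - X1 * sin T) / R0) by (apply is_derive_unique, Dth; auto).
  assert (EX2 : Derive (Derive x) t = 2 * F1 * cos T / R0 ^ 3 + sin T * F2 / R0 ^ 3).
  { change (Derive (Derive x) t) with (Derive_n x 2 t). rewrite Hmx by auto.
    unfold Vx. fold R0 T. rewrite dVr by lra. rewrite dVth by auto. fold F1 F2. field. lra. }
  assert (EY2 : Derive (Derive y) t = 2 * F1 * sin T / R0 ^ 3 - cos T * F2 / R0 ^ 3).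
  { change (Derive (Derive y) t) with (Derive_n y 2 t). rewrite Hmy by auto.
    unfold Vy. fold R0 T. rewrite dVr by lra. rewrite dVth by auto. fold F1 F2. field. lra. }
  assert (Hsc := sin2_cos2 T). unfold Rsqr in Hsc.
  assert (Ex2 : ex_derive (Derive x) t) by (apply Hdx; auto).
  assert (Ey2 : ex_derive (Derive y) t) by (apply Hdy; auto).
  assert (Eth1 : ex_derive th t) by (eexists; apply Dth; auto).
  assert (Er1 : ex_derive r t) by (eexists; apply Dr; auto).
  assert (Ex1 : ex_derive x t) by auto.
  assert (Ey1 : ex_derive y t) by auto.
  assert (DP : is_derive Pf t (2 * F1 / R0 ^ 3 + (Y1 * cos T - X1 * sin T) ^ 2 / R0)).
  { unfold Pf. auto_derive.
    - repeat split; assumption.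
    - etafix. fold X1 Y1 T. rewrite EX2, EY2, Eth.
      transitivity (2 * F1 * (sin T * sin T + cos T * cos T) / R0 ^ 3 + (Y1 * cos T - X1 * sin T) ^ 2 / R0).
      + field. lra.
      + rewrite Hsc. field. lra. }
  assert (DQ : is_derive Qf t (- F2 / R0 ^ 2)).
  { unfold Qf. auto_derive.
    - repeat split; assumption.
    - etafix. fold X1 Y1 T R0. rewrite EX2, EY2, Eth, Erth. unfold Pf. fold X1 Y1 T.
      transitivity (- F2 * (sin T * sin T + cos T * cos T) / R0 ^ 2).
      + field. lra.
      + rewrite Hsc. field. lra. }
  assert (Loc : locally t (fun s => Jval f c1 (r s) (th s) (Pf s) (Qf s) =
      Jval f c1 (r s) (th s) (Derive r s) (r s ^ 2 * Derive th s))).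
  { apply filter_imp with (2 := HI t Ht). intros u Hu.
    rewrite (is_derive_unique _ _ _ (Dr u Hu)), (is_derive_unique _ _ _ (Dth u Hu)).
    unfold Pf, Qf. f_equal. field. apply Rgt_not_eq, Hr, Hu. }
  apply (is_derive_ext_loc _ _ _ _ Loc).
  assert (EPt : Pf t = X1 * cos T + Y1 * sin T) by reflexivity.
  assert (EQt : Qf t = R0 * (Y1 * cos T - X1 * sin T)) by reflexivity.
  assert (EPd : ex_derive Pf t) by (eexists; exact DP).
  assert (EQd : ex_derive Qf t) by (eexists; exact DQ).
  clearbody Pf Qf.
  unfold Jval. auto_derive.
  { repeat split; try assumption; fold R0; lra. }
  etafix. fold R0 T. fold F0 F1. change (Derive (Derive f) T) with F2.
  rewrite (is_derive_unique _ _ _ DP), (is_derive_unique _ _ _ DQ), Eth, Erth, EPt, EQt.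
  pose proof (Hode T HT) as HO. unfold f_ode in HO. cbv zeta in HO. fold F0 F1 F2 in HO.
  transitivity ((sin T * ((3 * F1 + c1) * F2 - 2 * F0 * F1)
    + cos T * (F0 * F2 + 4 * F1 ^ 2 + 2 * c1 * F1)) / R0 ^ 3).
  - field. lra.
  - rewrite HO. field. lra.
Qed.
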